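(* Let $0 < 1/n_0 \ll \delta \ll 1$ and let $n\ge n_0$ and $k$ be positive integers with $k^2+k+1 \ge n \ge (k-1)^2+k+1$. Let $\mathcal H$ be an $n$-vertex linear hypergraph in which every edge $e$ satisfies $|e| \ge (1-\delta)\sqrt n$, and let $e,f\in\mathcal H$ be distinct intersecting edges each of size at most $k$. Let $w\in e\cap f$ and let $m$ be the number of edges of $\mathcal H$ of size at most $k-1$ containing $w$. If at least one of $e,f$ has size at most $k-1$, or if $m \le 1/(3\delta)$, then $\{e,f\}$ is a useful pair.
   Context: A hypergraph has a finite vertex set and a set of nonempty edges; linear means any two distinct edges share at most one vertex. For an edge $e$, $N(e)$ denotes the set of edges $f\ne e$ with $f\cap e\ne\varnothing$. In an $n$-vertex hypergraph a pair $\{e,f\}$ of edges is useful if $e\neq f$, $e\cap f\ne\varnothing$ and $|N(e)\cap N(f)|\le n-2$. Hierarchy convention: $0<1/n_0\ll\delta\ll1$ means there is $\delta_0>0$ such that for all $0<\delta\le\delta_0$ there is $n_0$ (depending on $\delta$) for which the statement holds. *)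

(* Defs.v *)
From HB Require Import structures.
From mathcomp Require Import all_boot all_order all_algebra.
From mathcomp Require Import reals.
Set Implicit Arguments. Unset Strict Implicit. Unset Printing Implicit Defensive.
Import Order.TTheory GRing.Theory Num.Theory.

Definition hypergraph n (H : {set {set 'I_n}}) : Prop :=
  forall e, e \in H -> e != set0.

Definition linear_hypergraph n (H : {set {set 'I_n}}) : Prop :=
  forall e f, e \in H -> f \in H -> e != f -> #|e :&: f| <= 1.

Definition nbhd n (H : {set {set 'I_n}}) (e : {set 'I_n}) : {set {set 'I_n}} :=
  [set f in H | (f != e) && (f :&: e != set0)].

Definition useful_pair n (H : {set {set 'I_n}}) (e f : {set 'I_n}) : Prop :=
  [/\ e != f, e :&: f != set0 & #|nbhd H e :&: nbhd H f| <= n - 2].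

(* Main.v *)
Require Import Defs.
From HB Require Import structures.
From mathcomp Require Import all_boot all_order all_algebra.
From mathcomp Require Import reals.
From mathcomp Require Import ring lra zify.
Import Order.TTheory GRing.Theory Num.Theory.

Local Open Scope ring_scope.

Lemma sqrt_lb (R : realType) (n k : nat) :
  (k * k + 2 <= n + k)%N -> (k%:R - 1/2 : R) <= Num.sqrt (n%:R : R).
Proof.
move=> h.
have hr : ((k * k + 2)%N%:R : R) <= (n + k)%N%:R by rewrite ler_nat.
rewrite !natrD natrM in hr.
have s0 := sqrtr_ge0 (n%:R : R).
have s2 := @sqr_sqrtr R (n%:R) (ler0n _ _).
set s := Num.sqrt _ in s0 s2 *.
rewrite expr2 in s2.
have k0 : (0 : R) <= k%:R by [].
nra.
Qed.

Lemma real_facts (R : realType) (d : R) (n k x m : nat) :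
  0 < d -> d <= 1/10 -> 1 <= d * k%:R -> (3 <= k)%N -> (k * k + 2 <= n + k)%N ->
  (1 - d) * Num.sqrt (n%:R : R) <= x%:R ->
  (3 * k <= 4 * x)%N /\ (m%:R <= 1 / (3 * d) -> (2 * m * (k - x) <= k + 1)%N).
Proof.
move=> d0 d1 dk k3 hn hx.
have sl := @sqrt_lb R n k hn.
have s0 := sqrtr_ge0 (n%:R : R).
set s := Num.sqrt _ in sl s0 hx.
have k3r : (3 : R) <= k%:R by rewrite (ler_nat R 3 k).
have hx2 : (1 - d) * (k%:R - 1/2) <= x%:R.
  apply: le_trans hx; apply: ler_wpM2l; lra.
split.
  rewrite -(ler_nat R) !natrM; nra.
move=> hm.
have m0 : (0 : R) <= m%:R by [].
have hm' : 3 * d * m%:R <= 1.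
  rewrite -(@ler_pM2r _ (1/(3*d))) ?divr_gt0 //; last lra.
  by rewrite mul1r mulrC mulrA mul1r mulrC mulVf ?mul1r //; lra.
case: (leqP k x) => kx.
  have -> : (k - x = 0)%N by lia.
  by rewrite muln0.
rewrite -(ler_nat R) !natrM natrB ?(ltnW kx) // natrD.
nra.
Qed.

Local Close Scope ring_scope.
Set Implicit Arguments. Unset Strict Implicit.

Lemma le1_eq (T : finType) (A : {set T}) x y : #|A| <= 1 -> x \in A -> y \in A -> x = y.
Proof. by move/card_le1_eqP => h hx hy; apply: h. Qed.

Lemma lin_eq n (H : {set {set 'I_n}}) g1 g2 x y : linear_hypergraph H ->
  g1 \in H -> g2 \in H -> x != y -> x \in g1 -> y \in g1 -> x \in g2 -> y \in g2 -> g1 = g2.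
Proof.
move=> hl h1 h2 xy x1 y1 x2 y2; case: (eqVneq g1 g2) => // ne.
have := le1_eq (hl _ _ h1 h2 ne) (x := x) (y := y).
by rewrite !inE x1 y1 x2 y2 => /(_ isT isT) /eqP; rewrite (negbTE xy).
Qed.

Lemma pick_in (T : finType) (A : {set T}) (w : T) : A != set0 -> odflt w [pick x in A] \in A.
Proof.
move=> hA; case: pickP => [x hx|h0] //=.
by case/set0Pn: hA => x hx; rewrite h0 in hx.
Qed.

Lemma sum_star n (H : {set {set 'I_n}}) (w : 'I_n) : linear_hypergraph H ->
  \sum_(g in [set g in H | w \in g]) #|g :\ w| <= n - 1.
Proof.
move=> hl; set W := [set g in H | w \in g].
have -> : \sum_(g in W) #|g :\ w| =
   \sum_(g in W) \sum_(v : 'I_n) (if v \in g :\ w then 1 else 0).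
  by apply: eq_bigr => g _; rewrite -sum1_card big_mkcond.
rewrite exchange_big /=.
rewrite (bigD1 w) //=.
have -> : \sum_(g in W) (if w \in g :\ w then 1 else 0) = 0.
  by apply: big1 => g _; rewrite setD11.
rewrite add0n.
apply: (@leq_trans (\sum_(v | v != w) 1)); last first.
  by rewrite sum1_card cardC1 card_ord; lia.
apply: leq_sum => v vw.
rewrite -big_mkcondr /=.
have -> : \sum_(g in W | v \in g :\ w) 1 = #|[set g in W | v \in g :\ w]|.
  by rewrite -sum1_card; apply: eq_bigl => g; rewrite inE.
apply/card_le1_eqP => g1 g2; rewrite !inE.
move=> /and3P[/andP[h1 w1] _ v1] /and3P[/andP[h2 w2] _ v2].
symmetry; exact: (lin_eq hl h1 h2 vw).
Qed.

Lemma common_bound n (H : {set {set 'I_n}}) e f w : linear_hypergraph H ->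
  e \in H -> f \in H -> e != f -> w \in e :&: f ->
  #|nbhd H e :&: nbhd H f| <= (#|e| - 1) * (#|f| - 1) + (#|[set g in H | w \in g]| - 2).
Proof.
move=> hl he hf ef wef.
set W := [set g in H | w \in g]; set C := nbhd H e :&: nbhd H f.
have we : w \in e by move: wef; rewrite inE => /andP[].
have wf : w \in f by move: wef; rewrite inE => /andP[].
rewrite -(cardsID W C).
have eW : e \in W by rewrite inE he we.
have fW : f \in W by rewrite inE hf wf.
have c1 : #|C :&: W| <= #|W| - 2.
  have fWe : f \in W :\ e by rewrite in_setD1 eq_sym ef fW.
  rewrite (cardsD1 e W) eW (cardsD1 f (W :\ e)) fWe /=.
  have -> : ((1 + (1 + #|W :\ e :\ f|)) - 2 = #|W :\ e :\ f|)%N by lia.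
  apply: subset_leq_card; apply/subsetP => g; rewrite !inE.
  by move=> /andP[/andP[/andP[_ /andP[-> _]] /andP[_ /andP[-> _]]] ->].
have c2 : #|C :\: W| <= (#|e| - 1) * (#|f| - 1).
  pose h (g : {set 'I_n}) := (odflt w [pick x in g :&: e], odflt w [pick x in g :&: f]).
  have hin : forall g, g \in C :\: W ->
     [/\ g \in H, w \notin g, h g \in setX (e :\ w) (f :\ w),
       (h g).1 \in g & (h g).2 \in g].
    move=> g; rewrite !inE => /andP[hw /andP[/andP[gH /andP[_ ge]] /andP[_ /andP[_ gf]]]].
    rewrite gH /= in hw.
    have p1 := pick_in w ge; have p2 := pick_in w gf.
    move: p1 p2; rewrite /h /= !inE => /andP[x1 x2] /andP[y1 y2].
    split => //; rewrite ?x2 ?y2 ?andbT.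
      apply/andP; split; apply/negP => /eqP ex; move: hw; rewrite -ex ?x1 ?y1 //.
  rewrite -(card_in_imset (f := h)); last first.
    move=> g1 g2 g1C g2C eh.
    case: (hin _ g1C) => h1 nw1 hx1 a1 b1.
    case: (hin _ g2C) => h2 nw2 hx2 a2 b2.
    rewrite eh in a1 b1.
    move: hx2; rewrite !inE => /andP[/andP[xw xe] /andP[yw yf]].
    apply: (lin_eq hl h1 h2 _ a1 b1 a2 b2).
    apply/eqP => exy.
    have : (h g2).1 = w.
      apply: (le1_eq (hl _ _ he hf ef)) => //.
      by rewrite inE xe exy.
    by move/eqP; rewrite (negbTE xw).
  have ce : #|e :\ w| = (#|e| - 1)%N by rewrite (cardsD1 w e) we; lia.
  have cf : #|f :\ w| = (#|f| - 1)%N by rewrite (cardsD1 w f) wf; lia.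
  apply: leq_trans (_ : #|setX (e :\ w) (f :\ w)| <= _); last first.
    by rewrite cardsX ce cf.
  apply: subset_leq_card; apply/subsetP => p /imsetP [g gC ->].
  by case: (hin _ gC).
lia.
Qed.

Local Close Scope ring_scope.
Lemma arithA : forall c P d' k n S, c <= P + (d'-2) -> P <= (k-2)*(k-1) -> d'*(3*k-4) <= 4*S -> S <= n-1 ->
  n <= k*k+k+1 -> k*k+2 <= n+k -> 10 <= k -> c <= n-2.
move=> c P d' k n S hc hP h4 hs hk1 hkn k10.
have e1 : (k-2)*(k-1) + 3*k = k*k + 2 by nia.
have hd : d' <= 2 * k.
  case: (leqP d' (2 * k)) => // hd.
  have hm : ((2 * k + 1) * (3 * k - 4) <= d' * (3 * k - 4))%N by apply: leq_mul; lia.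
  have e2 : (2*k+1)*(3*k-4) + 5*k + 4 = 6*(k*k) by nia.
  have hK : 10 * k <= k * k by apply: leq_mul.
  move: e2 hm hk1 hkn hK h4; generalize ((2*k+1)*(3*k-4)) (d' * (3 * k - 4)) (k*k) => A B K; lia.
move: e1 hP hk1 hkn; generalize ((k-2)*(k-1)) (k*k) => Q K; lia.
Qed.
Lemma arithB : forall c P d' k n S T, c <= P + (d'-2) -> P <= (k-1)*(k-1) -> d'*(k-1) <= S + T -> S <= n-1 ->
  2 * T <= k+1 -> k*k+2 <= n+k -> 10 <= k -> c <= n-2.
move=> c P d' k n S T hc hP h4 hs hT hkn k10.
have e3 : (k-1)*(k-1) + 2*k = k*k + 1 by nia.
case: (leqP d' (k + 1)) => hd.
  move: e3 hP hkn; generalize ((k-1)*(k-1)) (k*k) => Q K; lia.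
have hm : ((k + 2) * (k - 2) <= d' * (k - 2))%N by apply: leq_mul; lia.
have e4 : (k+2)*(k-2) + 4 = k*k by nia.
have e5 : d'*(k-1) = d'*(k-2) + d' by nia.
move: e3 hP e4 e5 h4 hm hkn; generalize ((k-1)*(k-1)) (k*k) ((k + 2) * (k - 2)) (d'*(k-1)) (d'*(k-2)) => Q K A B C; lia.
Qed.

Lemma lemK N k n : 0 < k -> n <= k*k+k+1 -> (N + 10) * (N + 10) + (N + 10) + 2 <= n -> N+10 <= k.
Proof.
move=> k0 h1 h2.
case: (leqP (N+10) k) => // hk.
have : (k * k <= (N+9)*(N+9))%N by apply: leq_mul; lia.
lia.
Qed.
Lemma lemH k n : 0 < k -> (k-1)*(k-1) + k + 1 <= n -> k * k + 2 <= n + k.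
Proof.
move: k => [//|k] _; rewrite subSS subn0 => h.
have : (k.+1 * k.+1 = k * k + 2 * k + 1)%N by rewrite mulSn mulnS; lia.
lia.
Qed.
Lemma lem4 k x : 3 * k <= 4 * x -> 3 * k - 4 <= 4 * (x - 1).
Proof. lia. Qed.
Lemma lemP a b k : a <= k - 1 -> b <= k -> (a - 1) * (b - 1) <= (k - 2) * (k - 1).
Proof. move=> ha hb; apply: leq_mul; lia. Qed.
Lemma lemP2 a b k : a <= k -> b <= k -> (a - 1) * (b - 1) <= (k - 1) * (k - 1).
Proof. move=> ha hb; apply: leq_mul; lia. Qed.
Lemma lemT1 k x : 0 < x -> k - 1 <= (x - 1) + (k - x).
Proof. lia. Qed.
Lemma lemTS k x : k - 1 < x -> k - x = 0.
Proof. lia. Qed.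
Lemma lemT2 T S k : T <= S -> 2 * S <= k + 1 -> 2 * T <= k + 1.
Proof. lia. Qed.
Lemma lem10 N k : N + 10 <= k -> 10 <= k.
Proof. lia. Qed.

Unset Implicit Arguments. Set Strict Implicit.
Local Open Scope ring_scope.

Theorem proposition5p5 (R : realType) :
  exists delta0 : R, 0 < delta0 /\
  forall delta : R, 0 < delta -> delta <= delta0 ->
  exists n0 : nat, forall (n k : nat) (H : {set {set 'I_n}})
    (e f : {set 'I_n}) (w : 'I_n),
    (n0 <= n)%N -> (0 < n)%N -> (0 < k)%N ->
    (k ^ 2 + k + 1 >= n)%N -> (n >= (k - 1) ^ 2 + k + 1)%N ->
    hypergraph H -> linear_hypergraph H ->
    (forall g, g \in H -> (1 - delta) * Num.sqrt (n%:R : R) <= #|g|%:R) ->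
    e \in H -> f \in H -> e != f -> e :&: f != set0 ->
    (#|e| <= k)%N -> (#|f| <= k)%N ->
    w \in e :&: f ->
    let m := #|[set g in H | (#|g| <= k - 1)%N && (w \in g)]| in
    ((#|e| <= k - 1)%N \/ (#|f| <= k - 1)%N \/ m%:R <= 1 / (3 * delta)) ->
    useful_pair H e f.
Proof.
exists (1/10); split; first lra.
move=> d d0 d1.
have id0 : 0 <= 1 / d by rewrite divr_ge0 // ltW.
have hN := archi_boundP id0.
set N := Num.Def.archi_bound (1 / d) in hN.
exists ((N + 10) * (N + 10) + (N + 10) + 2)%N.
move=> n k H e f w hn0 n0 k0 hk1 hk2 hhyp hlin hsize he hf ef ei ek fk wef m hcase.
rewrite !expnS expn0 !muln1 in hk1 hk2.
have kN : (N + 10 <= k)%N := lemK k0 hk1 hn0.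
have hkn : (k * k + 2 <= n + k)%N := lemH k0 hk2.
have k10 : (10 <= k)%N := lem10 kN.
have dk : 1 <= d * k%:R.
  have : (N%:R : R) <= k%:R by rewrite ler_nat (leq_trans (leq_addr 10 N) kN).
  have : d * (1 / d) = 1 by rewrite mulrC mul1r mulVf // gt_eqF.
  nra.
have k3 : (3 <= k)%N by apply: leq_trans k10.
have RF := fun g (hg : g \in H) => @real_facts R d n k #|g| m d0 d1 dk k3 hkn (hsize g hg).
set W := [set g in H | w \in g].
have hc := common_bound hlin he hf ef wef.
have hs := sum_star w hlin.
rewrite -/W in hc hs.
have eqs : \sum_(g in W) #|g :\ w| = \sum_(g in W) (#|g| - 1)%N.
  apply: eq_bigr => g; rewrite inE => /andP[_ wg].
  by rewrite (cardsD1 w g) wg add1n subn1.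
rewrite eqs in hs.
set c := #|_ :&: _| in hc.
set d' := #|W| in hc.
split => //.
have h4 : (d' * (3 * k - 4) <= 4 * \sum_(g in W) (#|g| - 1))%N.
  rewrite big_distrr /= -sum_nat_const; apply: leq_sum => g; rewrite inE => /andP[hg _].
  by case: (RF g hg) => h _; apply: lem4.
case: hcase => [hA|[hA|hB]].
- have hP := lemP hA fk.
  exact: (arithA hc hP h4 hs hk1 hkn k10).
- have hP : ((#|e| - 1) * (#|f| - 1) <= (k - 2) * (k - 1))%N.
    by rewrite mulnC; apply: lemP.
  exact: (arithA hc hP h4 hs hk1 hkn k10).
- pose S := [set g in H | (#|g| <= k - 1)%N && (w \in g)].
  have mS : m = #|S| by [].
  set T := \sum_(g in W) (k - #|g|)%N.
  have hT1 : (d' * (k - 1) <= \sum_(g in W) (#|g| - 1) + T)%N.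
    rewrite -sum_nat_const /T -big_split /=; apply: leq_sum => g; rewrite inE => /andP[_ wg].
    apply: lemT1; by apply/card_gt0P; exists w.
  have hTS : (T <= \sum_(g in S) (k - #|g|))%N.
    rewrite /T [X in (X <= _)%N]big_mkcond [X in (_ <= X)%N]big_mkcond /=.
    apply: leq_sum => g _; rewrite !inE.
    case: (g \in H) => //=; case: (w \in g); rewrite ?andbT ?andbF //=.
    by case: (leqP #|g| (k - 1)) => // hg; rewrite lemTS.
  have hT2 : (2 * T <= k + 1)%N.
    case: (posnP m) => hm.
      have S0 : S = set0 by apply: cards0_eq; rewrite -mS.
      by move: hTS; rewrite S0 big_set0 leqn0 => /eqP ->.
    have : (m * (2 * \sum_(g in S) (k - #|g|)) <= m * (k + 1))%N.
      rewrite mulnA big_distrr /=.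
      apply: (@leq_trans (\sum_(g in S) (k + 1))); last by rewrite sum_nat_const mS.
      apply: leq_sum => g; rewrite inE => /andP[hg _].
      case: (RF g hg) => _ /(_ hB) h.
      by rewrite (mulnC m 2).
    rewrite leq_pmul2l // => h.
    exact: lemT2 hTS h.
  have hP := lemP2 ek fk.
  exact: (arithB hc hP hT1 hs hT2 hkn k10).
Qed.
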